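(* Let $e_k(x)=x^k$ for $k\in\{0,1,2\}$, $x\in[0,1]$, and let $A:C([0,1])\to C([0,1])$ be a weakly nonlinear and monotone operator with $A(1)(x)>0$ for all $x\in[0,1]$. Let $T_n:C([0,1])\to C([0,1])$ ($n\ge1$) be weakly nonlinear and monotone operators. Put $M=\big(\inf_{x\in[0,1]}A(1)(x)\big)^{-1}$ and $$\mu_n=\|T_n(e_2)A(1)-2T_n(-e_1)A(-e_1)+T_n(1)A(e_2)\|^{1/2}.$$ Then for every $f\in C([0,1])$ and $n\ge1$, $$\|T_n(f)-A(f)\|\le M\big\{\|T_n(1)-A(1)\|\cdot\|A(f)\|+(\|T_n(1)A(1)\|+1)\,\omega(f,\mu_n)\big\}.$$ If moreover $T_n(1)=A(1)$, then $\|T_n(f)-A(f)\|\le M\big(\|A(1)^2\|+1\big)\,\omega(f,\mu_n)$.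
   Context: $C([0,1])$ is the space of continuous real functions on $[0,1]$ with pointwise order and sup norm $\|g\|=\sup_{x\in[0,1]}|g(x)|$; products are pointwise and $1=e_0$ is the constant function one. An operator $T:C([0,1])\to C([0,1])$ is weakly nonlinear if $T(f+g)\le T(f)+T(g)$ and $T(\alpha f)=\alpha T(f)$ for all $f,g$ and $\alpha\ge0$, and $T(f+\alpha\cdot1)=T(f)+\alpha T(1)$ for all $f$ and $\alpha\ge0$. $T$ is monotone if $f\le g$ implies $T(f)\le T(g)$. The modulus of continuity is $\omega(f,\delta)=\sup\{|f(x)-f(y)|:x,y\in[0,1],|x-y|\le\delta\}$ for $\delta>0$, with $\omega(f,0)=0$. *)

(* Defs.v *)
From Stdlib Require Import Reals Lra.
From Coquelicot Require Import Coquelicot.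
Open Scope R_scope.

(* Clamping R onto [0,1]: clamp x = max 0 (min 1 x). *)
Definition clamp (x : R) : R := (Rabs x - Rabs (x - 1) + 1) / 2.

Lemma clamp_in01 x : 0 <= x <= 1 -> clamp x = x.
Proof. intros H; unfold clamp; rewrite (Rabs_right x) by lra;
  rewrite (Rabs_left1 (x - 1)) by lra; lra. Qed.

Lemma clamp_range x : 0 <= clamp x <= 1.
Proof. unfold clamp; destruct (Rcase_abs x); destruct (Rcase_abs (x-1));
  [rewrite (Rabs_left x), (Rabs_left (x-1)) by lra
  |rewrite (Rabs_left x), (Rabs_right (x-1)) by lra
  |rewrite (Rabs_right x), (Rabs_left (x-1)) by lra
  |rewrite (Rabs_right x), (Rabs_right (x-1)) by lra]; lra. Qed.

Lemma clamp_idem x : clamp (clamp x) = clamp x.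
Proof. apply clamp_in01, clamp_range. Qed.

Lemma clamp_cont x : continuity_pt clamp x.
Proof.
  unfold clamp. apply continuity_pt_div; [|apply continuity_pt_const; intros ??; reflexivity|lra].
  apply continuity_pt_plus; [|apply continuity_pt_const; intros ??; reflexivity].
  apply continuity_pt_minus.
  - apply Rcontinuity_abs.
  - apply (continuity_pt_comp (fun x => x - 1) Rabs).
    + apply continuity_pt_minus; [apply derivable_continuous_pt, derivable_pt_id|
        apply continuity_pt_const; intros ??; reflexivity].
    + apply Rcontinuity_abs.
Qed.

(* C([0,1]): a continuous function on [0,1] is represented by its (unique)
   continuous extension to R that is constant outside [0,1], i.e. f = f o clamp. *)
Record C01 := mkC01 {
  fn :> R -> R;
  fn_cont : forall x, continuity_pt fn x;
  fn_clamp : forall x, fn x = fn (clamp x) }.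

Definition cst (c : R) : C01.
Proof. refine (mkC01 (fun _ => c) _ _); [intros; apply continuity_pt_const; intros ??; reflexivity | reflexivity]. Defined.

Definition one01 : C01 := cst 1.

Definition cadd (f g : C01) : C01.
Proof. refine (mkC01 (fun x => f x + g x) _ _).
  - intros; apply continuity_pt_plus; apply fn_cont.
  - intros; rewrite (fn_clamp f x), (fn_clamp g x); reflexivity. Defined.

Definition cmul (f g : C01) : C01.
Proof. refine (mkC01 (fun x => f x * g x) _ _).
  - intros; apply continuity_pt_mult; apply fn_cont.
  - intros; rewrite (fn_clamp f x), (fn_clamp g x); reflexivity. Defined.

Definition cscale (a : R) (f : C01) : C01 := cmul (cst a) f.
Definition copp (f : C01) : C01 := cscale (-1) f.
Definition csub (f g : C01) : C01 := cadd f (copp g).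

Definition e1 : C01.
Proof. refine (mkC01 clamp clamp_cont _). intros; now rewrite clamp_idem. Defined.
Definition e2 : C01 := cmul e1 e1.

Definition cle (f g : C01) : Prop := forall x, 0 <= x <= 1 -> f x <= g x.

Definition supnorm (f : C01) : R :=
  real (Lub_Rbar (fun y => exists x, 0 <= x <= 1 /\ y = Rabs (f x))).

Definition inf01 (f : C01) : R :=
  real (Glb_Rbar (fun y => exists x, 0 <= x <= 1 /\ y = f x)).

Definition modc (f : C01) (d : R) : R :=
  if Rle_dec d 0 then 0 else
  real (Lub_Rbar (fun y => exists x z, 0 <= x <= 1 /\ 0 <= z <= 1 /\
                     Rabs (x - z) <= d /\ y = Rabs (f x - f z))).

Definition weakly_nonlinear (T : C01 -> C01) : Prop :=
  (forall f g, cle (T (cadd f g)) (cadd (T f) (T g))) /\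
  (forall f a, 0 <= a -> T (cscale a f) = cscale a (T f)) /\
  (forall f a, 0 <= a -> T (cadd f (cscale a one01)) = cadd (T f) (cscale a (T one01))).

Definition monotone (T : C01 -> C01) : Prop :=
  forall f g, cle f g -> cle (T f) (T g).

(* Main.v *)
Require Import Defs.
From Stdlib Require Import Reals Lra Psatz ZArith ProofIrrelevance FunctionalExtensionality.
From Coquelicot Require Import Coquelicot.
Open Scope R_scope.

Lemma C01_ext (f g : C01) : (forall x, 0 <= x <= 1 -> f x = g x) -> f = g.
Proof.
  destruct f as [f fc fcl], g as [g gc gcl]; simpl; intros H.
  assert (f = g) as E.
  { apply functional_extensionality; intros x. rewrite (fcl x), (gcl x). apply H, clamp_range. }
  subst g. f_equal; apply proof_irrelevance.
Qed.

Lemma cadd_ev (f g : C01) x : cadd f g x = f x + g x. Proof. reflexivity. Qed.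
Lemma cmul_ev (f g : C01) x : cmul f g x = f x * g x. Proof. reflexivity. Qed.
Lemma cscale_ev a (f : C01) x : cscale a f x = a * f x. Proof. reflexivity. Qed.
Lemma copp_ev (f : C01) x : copp f x = -1 * f x. Proof. reflexivity. Qed.
Lemma csub_ev (f g : C01) x : csub f g x = f x + -1 * g x. Proof. reflexivity. Qed.
Lemma one_ev x : one01 x = 1. Proof. reflexivity. Qed.
Lemma e1_ev x : 0 <= x <= 1 -> e1 x = x. Proof. intros; apply clamp_in01; auto. Qed.
Lemma e2_ev x : 0 <= x <= 1 -> e2 x = x * x.
Proof. intros; unfold e2; rewrite cmul_ev, e1_ev; auto. Qed.

Lemma lub_fin (E : R -> Prop) (B y0 : R) : E y0 -> (forall y, E y -> y <= B) ->
  (forall y, E y -> y <= real (Lub_Rbar E)) /\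
  (forall C, (forall y, E y -> y <= C) -> real (Lub_Rbar E) <= C).
Proof.
  intros H0 HB. generalize (Lub_Rbar_correct E). destruct (Lub_Rbar E) as [l| |]; intros [ub lub]; simpl.
  - split. intros y Hy. exact (ub y Hy). intros C HC. exact (lub C HC).
  - exfalso. exact (lub B HB).
  - exfalso. exact (ub y0 H0).
Qed.

Lemma glb_fin (E : R -> Prop) (B y0 : R) : E y0 -> (forall y, E y -> B <= y) ->
  (forall y, E y -> real (Glb_Rbar E) <= y) /\
  (forall C, (forall y, E y -> C <= y) -> C <= real (Glb_Rbar E)).
Proof.
  intros H0 HB. generalize (Glb_Rbar_correct E). destruct (Glb_Rbar E) as [l| |]; intros [ub lub]; simpl.
  - split. intros y Hy. exact (ub y Hy). intros C HC. exact (lub C HC).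
  - exfalso. exact (ub y0 H0).
  - exfalso. exact (lub B HB).
Qed.

Lemma bounded01 (g : C01) : exists B, forall x, 0 <= x <= 1 -> Rabs (g x) <= B.
Proof.
  destruct (continuity_ab_maj (fun x => Rabs (g x)) 0 1) as [Mx [H _]]; [lra| |].
  - intros c _. apply (continuity_pt_comp g Rabs); [apply fn_cont | apply Rcontinuity_abs].
  - exists (Rabs (g Mx)); auto.
Qed.

Lemma supnorm_ge (g : C01) x : 0 <= x <= 1 -> Rabs (g x) <= supnorm g.
Proof.
  intros Hx. destruct (bounded01 g) as [B HB]. unfold supnorm.
  destruct (lub_fin (fun y => exists x, 0 <= x <= 1 /\ y = Rabs (g x)) B (Rabs (g 0))) as [H1 _].
  - exists 0; split; [lra|auto].
  - intros y [z [Hz ->]]; auto.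
  - apply H1; eauto.
Qed.

Lemma supnorm_le (g : C01) B : (forall x, 0 <= x <= 1 -> Rabs (g x) <= B) -> supnorm g <= B.
Proof.
  intros HB. unfold supnorm.
  destruct (lub_fin (fun y => exists x, 0 <= x <= 1 /\ y = Rabs (g x)) B (Rabs (g 0))) as [_ H2].
  - exists 0; split; [lra|auto].
  - intros y [z [Hz ->]]; auto.
  - apply H2. intros y [z [Hz ->]]; auto.
Qed.

Lemma supnorm_pos (g : C01) : 0 <= supnorm g.
Proof. apply Rle_trans with (Rabs (g 0)); [apply Rabs_pos | apply supnorm_ge; lra]. Qed.

Lemma inf01_pos (g : C01) : (forall x, 0 <= x <= 1 -> 0 < g x) ->
  0 < inf01 g /\ forall x, 0 <= x <= 1 -> inf01 g <= g x.
Proof.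
  intros Hp. destruct (continuity_ab_min g 0 1) as [mx [Hm Hmx]]; [lra| intros; apply fn_cont |].
  unfold inf01.
  destruct (glb_fin (fun y => exists x, 0 <= x <= 1 /\ y = g x) (g mx) (g 0)) as [H1 H2].
  - exists 0; split; [lra|auto].
  - intros y [z [Hz ->]]; auto.
  - split.
    + apply Rlt_le_trans with (g mx); [apply Hp; auto|]. apply H2. intros y [z [Hz ->]]; auto.
    + intros x Hx. apply H1; eauto.
Qed.

Definition MSet (f : C01) d := (fun y => exists x z, 0 <= x <= 1 /\ 0 <= z <= 1 /\
                     Rabs (x - z) <= d /\ y = Rabs (f x - f z)).

Lemma modc_prop (f : C01) d : 0 < d ->
  0 <= modc f d /\
  (forall x z, 0 <= x <= 1 -> 0 <= z <= 1 -> Rabs (x - z) <= d -> Rabs (f x - f z) <= modc f d) /\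
  (forall C, (forall x z, 0 <= x <= 1 -> 0 <= z <= 1 -> Rabs (x - z) <= d -> Rabs (f x - f z) <= C) -> modc f d <= C).
Proof.
  intros Hd. destruct (bounded01 f) as [B HB].
  unfold modc. destruct (Rle_dec d 0) as [h|_]; [lra|].
  destruct (lub_fin (MSet f d) (B + B) 0) as [H1 H2].
  - exists 0, 0. repeat split; try lra. rewrite Rminus_0_r, Rabs_R0; lra. rewrite Rminus_eq_0, Rabs_R0; auto.
  - intros y [x [z [Hx [Hz [_ ->]]]]]. eapply Rle_trans. apply Rabs_triang.
    rewrite Rabs_Ropp. generalize (HB x Hx) (HB z Hz). lra.
  - unfold MSet in *. split; [|split].
    + apply H1. exists 0, 0. repeat split; try lra. rewrite Rminus_0_r, Rabs_R0; lra. rewrite Rminus_eq_0, Rabs_R0; auto.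
    + intros x z Hx Hz Hxz. apply H1. exists x, z; auto.
    + intros C HC. apply H2. intros y [x [z [Hx [Hz [Hxz ->]]]]]. auto.
Qed.

Lemma modc_chain (f : C01) d : 0 < d -> forall N : nat, forall t s, 0 <= t <= 1 -> 0 <= s <= 1 ->
  Rabs (t - s) <= INR N * d -> Rabs (f t - f s) <= modc f d * (1 + Rabs (t - s) / d).
Proof.
  intros Hd. destruct (modc_prop f d Hd) as [H0 [H1 _]].
  induction N as [|N IH]; intros t s Ht Hs Hts.
  - simpl in Hts. assert (t = s) as -> by (generalize (Rabs_pos (t - s)); intros;
      destruct (Rcase_abs (t - s)); [rewrite Rabs_left in Hts|rewrite Rabs_right in Hts]; lra).
    rewrite Rminus_eq_0, Rabs_R0. apply Rmult_le_pos; auto. rewrite Rminus_eq_0, Rabs_R0.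
    unfold Rdiv; rewrite Rmult_0_l; lra.
  - assert (Hq : 0 <= Rabs (t - s) / d) by (apply Rdiv_le_0_compat; [apply Rabs_pos|lra]).
    destruct (Rle_dec (Rabs (t - s)) d) as [Hle|Hgt].
    + apply Rle_trans with (modc f d); auto.
      rewrite <- (Rmult_1_r (modc f d)) at 1. apply Rmult_le_compat_l; lra.
    + rewrite S_INR in Hts.
      assert (exists p, 0 <= p <= 1 /\ Rabs (p - s) = d /\ Rabs (t - p) = Rabs (t - s) - d) as [p [Hp [Hps Htp]]].
      { destruct (Rcase_abs (t - s)) as [Hn|Hn].
        - rewrite Rabs_left in * by lra. exists (s - d).
          rewrite Rabs_left by lra. rewrite Rabs_left by lra. repeat split; lra.
        - rewrite Rabs_right in * by lra. exists (s + d).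
          rewrite Rabs_right by lra. rewrite Rabs_right by lra. repeat split; lra. }
      assert (A1 : Rabs (f t - f p) <= modc f d * (1 + Rabs (t - p) / d)) by (apply IH; auto; lra).
      assert (A2 : Rabs (f p - f s) <= modc f d) by (apply H1; auto; lra).
      replace (f t - f s) with ((f t - f p) + (f p - f s)) by ring.
      eapply Rle_trans; [apply Rabs_triang|]. rewrite Htp in A1.
      replace (modc f d * (1 + Rabs (t - s) / d)) with (modc f d * (1 + (Rabs (t - s) - d) / d) + modc f d)
        by (field; lra). lra.
Qed.

Lemma modc_bound (f : C01) d : 0 < d -> forall t s, 0 <= t <= 1 -> 0 <= s <= 1 ->
  Rabs (f t - f s) <= modc f d * (1 + (t - s)^2 / d^2).
Proof.
  intros Hd t s Ht Hs. destruct (modc_prop f d Hd) as [H0 [H1 _]].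
  destruct (Rle_dec (Rabs (t - s)) d) as [Hle|Hgt].
  - apply Rle_trans with (modc f d); auto. rewrite <- (Rmult_1_r (modc f d)) at 1.
    apply Rmult_le_compat_l; auto.
    assert (0 <= (t - s)^2 / d^2) by (apply Rdiv_le_0_compat; [apply pow2_ge_0 | apply pow_lt; lra]). lra.
  - destruct (archimed (/ d)) as [Hup _].
    set (N := Z.to_nat (up (/ d))).
    assert (HN : / d <= INR N).
    { unfold N. rewrite INR_IZR_INZ, Z2Nat.id. lra.
      apply le_IZR. assert (0 < / d) by (apply Rinv_0_lt_compat; lra). simpl; lra. }
    assert (Hts : Rabs (t - s) <= INR N * d).
    { apply Rle_trans with 1.
      - destruct (Rcase_abs (t - s)); [rewrite Rabs_left|rewrite Rabs_right]; lra.
      - apply Rle_trans with (/ d * d); [rewrite Rinv_l; lra|]. apply Rmult_le_compat_r; lra. }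
    eapply Rle_trans; [apply (modc_chain f d Hd N); auto|].
    apply Rmult_le_compat_l; auto.
    assert (Hr : 1 <= Rabs (t - s) / d).
    { apply Rmult_le_reg_r with d; [lra|]. unfold Rdiv; rewrite Rmult_assoc, Rinv_l; lra. }
    replace ((t - s)^2 / d^2) with ((Rabs (t - s) / d) * (Rabs (t - s) / d)).
    + nra.
    + rewrite <- (pow2_abs (t - s)). field. lra.
Qed.

Ltac ev := repeat rewrite ?cadd_ev, ?cscale_ev, ?copp_ev, ?cmul_ev, ?one_ev.

Section WN.
Variable P : C01 -> C01.
Hypothesis HPw : weakly_nonlinear P.
Hypothesis HPm : monotone P.

Lemma P_hom a g x : 0 <= a -> P (cscale a g) x = a * P g x.
Proof. intros Ha. destruct HPw as [_ [H _]]. rewrite H by auto. reflexivity. Qed.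

Lemma P_sub f g x : 0 <= x <= 1 -> P (cadd f g) x <= P f x + P g x.
Proof. intros Hx. destruct HPw as [H _]. apply H; auto. Qed.

Lemma P_tr g c x : P (cadd g (cscale c one01)) x = P g x + c * P one01 x.
Proof.
  destruct HPw as [_ [_ H]]. destruct (Rle_dec 0 c) as [Hc|Hc].
  - rewrite H by auto. reflexivity.
  - set (h := cadd g (cscale c one01)).
    assert (E : g = cadd h (cscale (-c) one01)).
    { apply C01_ext. intros y _. unfold h. ev; ring. }
    assert (E2 : P g x = P h x + (- c) * P one01 x).
    { rewrite E at 1. rewrite H by lra. reflexivity. }
    lra.
Qed.

Lemma P_zero g x : P (cscale 0 g) x = 0.
Proof. rewrite P_hom by lra. ring. Qed.

Lemma P_pos1 x : 0 <= x <= 1 -> 0 <= P one01 x.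
Proof.
  intros Hx. rewrite <- (P_zero one01 x). apply HPm; auto.
  intros y _. rewrite cscale_ev, one_ev. lra.
Qed.
End WN.

Lemma keyL (P Q : C01 -> C01) (f : C01) (d w x : R) :
  weakly_nonlinear P -> monotone P -> weakly_nonlinear Q -> monotone Q -> 0 < d -> 0 <= w ->
  (forall t s, 0 <= t <= 1 -> 0 <= s <= 1 -> Rabs (f t - f s) <= w * (1 + (t - s)^2 / d^2)) ->
  0 <= x <= 1 ->
  P f x * Q one01 x - P one01 x * Q f x <=
    w * (P one01 x * Q one01 x) +
    w / d^2 * (P e2 x * Q one01 x - 2 * (P (copp e1) x * Q (copp e1) x) + P one01 x * Q e2 x).
Proof.
  intros HPw HPm HQw HQm Hd Hw Hf Hx.
  set (k := w / d^2).
  assert (Hk : 0 <= k) by (unfold k; apply Rdiv_le_0_compat; [auto| apply pow_lt; lra]).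
  set (a := P (copp e1) x). set (b := P one01 x). set (pe := P e2 x). set (F := P f x).
  assert (Hb : 0 <= b) by (apply (P_pos1 P); auto).
  assert (Step1 : forall s, 0 <= s <= 1 -> F <= (f s + w + k * s^2) * b + k * (pe + 2 * s * a)).
  { intros s Hs.
    set (g := cadd (cscale k (cadd e2 (cscale (2*s) (copp e1)))) (cscale (f s + w + k * s^2) one01)).
    assert (Hle : cle f g).
    { intros t Ht. unfold g. ev; rewrite ?e2_ev, ?e1_ev by auto.
      specialize (Hf t s Ht Hs). apply Rabs_le_between in Hf. destruct Hf as [_ Hf].
      assert (Heq : w * (1 + (t - s)^2 / d^2) = w + k * (t*t + 2*s*(-1*t)) + k * s^2)
        by (unfold k; field; lra).
      lra. }
    assert (H1 : F <= P g x) by (apply HPm; auto).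
    unfold g in H1. rewrite (P_tr P HPw), (P_hom P HPw) in H1 by auto.
    assert (H2 : P (cadd e2 (cscale (2 * s) (copp e1))) x <= pe + 2 * s * a).
    { eapply Rle_trans. apply (P_sub P HPw); auto. rewrite (P_hom P HPw) by lra. unfold pe, a; lra. }
    fold b in H1.
    assert (k * P (cadd e2 (cscale (2 * s) (copp e1))) x <= k * (pe + 2 * s * a))
      by (apply Rmult_le_compat_l; auto).
    lra. }
  set (qa := Q (copp e1) x). set (qe := Q e2 x). set (q1 := Q one01 x). set (qf := Q f x).
  set (wf := cadd (cscale (2*a) (copp e1)) (cscale (-b) e2)).
  assert (Hwf : 2 * a * qa - b * qe <= Q wf x).
  { destruct (Rle_dec 0 a) as [Ha|Ha].
    - assert (E : cscale (2*a) (copp e1) = cadd wf (cscale b e2)).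
      { apply C01_ext; intros y _. unfold wf. ev; ring. }
      assert (H1 : Q (cscale (2*a) (copp e1)) x <= Q wf x + Q (cscale b e2) x)
        by (rewrite E; apply (P_sub Q HQw); auto).
      rewrite !(P_hom Q HQw) in H1 by lra. unfold qa, qe. lra.
    - set (u := cadd (cscale (-2*a) (copp e1)) (cscale b e2)).
      assert (E : cadd wf u = cscale 0 one01).
      { apply C01_ext; intros y _. unfold wf, u. ev; ring. }
      assert (H1 : Q (cadd wf u) x <= Q wf x + Q u x) by (apply (P_sub Q HQw); auto).
      rewrite E, (P_zero Q HQw) in H1.
      assert (H2 : Q u x <= Q (cscale (-2*a) (copp e1)) x + Q (cscale b e2) x) by (apply (P_sub Q HQw); auto).
      rewrite !(P_hom Q HQw) in H2 by lra. unfold qa, qe. lra. }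
  set (C := F - w * b - k * pe).
  set (Rf := cadd (cscale k wf) (cscale C one01)).
  assert (HR : cle Rf (cscale b f)).
  { intros s Hs. unfold Rf, wf. ev; rewrite ?e2_ev, ?e1_ev by auto.
    specialize (Step1 s Hs).
    assert (E1 : (f s + w + k*s^2)*b + k*(pe + 2*s*a) = b * f s + w*b + k*pe + (k*(2*a*s + b*(s*s)))) by ring.
    assert (E2 : k * (2 * a * (-1 * s) + - b * (s * s)) + C * 1 = C - k*(2*a*s + b*(s*s))) by ring.
    unfold C in *. lra. }
  assert (H3 : Q Rf x <= Q (cscale b f) x) by (apply HQm; auto).
  unfold Rf in H3. rewrite (P_tr Q HQw), (P_hom Q HQw), (P_hom Q HQw) in H3 by auto.
  fold q1 qf in H3.
  assert (H4 : k * (2 * a * qa - b * qe) <= k * Q wf x) by (apply Rmult_le_compat_l; auto).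
  fold k. fold q1 qf qa qe. unfold C in H3. nra.
Qed.

Lemma small_le0 X Y : 0 <= Y -> (forall eps, 0 < eps -> X <= eps * Y) -> X <= 0.
Proof.
  intros HY H. destruct (Rle_dec X 0) as [h|h]; auto. exfalso.
  assert (Hp : 0 < X / (Y + 1)) by (apply Rdiv_lt_0_compat; lra).
  specialize (H _ Hp).
  assert (X / (Y + 1) * Y < X).
  { apply Rmult_lt_reg_r with (Y + 1); [lra|]. unfold Rdiv. field_simplify; [|lra]. nra. }
  lra.
Qed.

Lemma modc_small (f : C01) eps : 0 < eps -> exists d, 0 < d /\ modc f d <= eps.
Proof.
  intros He. destruct (Heine f (fun c => 0 <= c <= 1) (compact_P3 0 1)) with (mkposreal eps He)
    as [del Hdel]; [intros; apply fn_cont|].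
  assert (Hd : 0 < del / 2) by (generalize (cond_pos del); lra).
  exists (del / 2); split; auto.
  destruct (modc_prop f _ Hd) as [_ [_ H3]]. apply H3.
  intros x z Hx Hz Hxz. left. apply (Hdel x z Hx Hz). generalize (cond_pos del); lra.
Qed.

Theorem corollary1 (A : C01 -> C01) (T : nat -> C01 -> C01) :
  weakly_nonlinear A -> monotone A ->
  (forall x, 0 <= x <= 1 -> 0 < A one01 x) ->
  (forall n, (1 <= n)%nat -> weakly_nonlinear (T n) /\ monotone (T n)) ->
  let M := / inf01 (A one01) in
  let mu := fun n : nat =>
    sqrt (supnorm (cadd (csub (cmul (T n e2) (A one01))
                           (cscale 2 (cmul (T n (copp e1)) (A (copp e1)))))
                     (cmul (T n one01) (A e2)))) in
  forall (f : C01) (n : nat), (1 <= n)%nat ->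
    supnorm (csub (T n f) (A f)) <=
      M * (supnorm (csub (T n one01) (A one01)) * supnorm (A f)
           + (supnorm (cmul (T n one01) (A one01)) + 1) * modc f (mu n))
    /\
    (T n one01 = A one01 ->
     supnorm (csub (T n f) (A f)) <= M * (supnorm (cmul (A one01) (A one01)) + 1) * modc f (mu n)).
Proof.
  intros HAw HAm HApos HT M mu f n Hn.
  destruct (HT n Hn) as [HSw HSm].
  set (S := T n) in *.
  set (Ef := cadd (csub (cmul (S e2) (A one01)) (cscale 2 (cmul (S (copp e1)) (A (copp e1)))))
                     (cmul (S one01) (A e2))).
  assert (Hmu : mu n = sqrt (supnorm Ef)) by reflexivity.
  destruct (inf01_pos (A one01) HApos) as [Hm Hmx].
  assert (HD : forall x, 0 <= x <= 1 ->
     Rabs (S f x * A one01 x - S one01 x * A f x) <= modc f (mu n) * (supnorm (cmul (S one01) (A one01)) + 1)).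
  { intros x Hx.
    assert (HEx : S e2 x * A one01 x - 2 * (S (copp e1) x * A (copp e1) x) + S one01 x * A e2 x <= supnorm Ef).
    { eapply Rle_trans; [|apply (supnorm_ge Ef x Hx)]. eapply Rle_trans; [|apply Rle_abs].
      unfold Ef. ev. rewrite csub_ev. ev. lra. }
    assert (HEx' : A e2 x * S one01 x - 2 * (A (copp e1) x * S (copp e1) x) + A one01 x * S e2 x <= supnorm Ef) by lra.
    assert (HSA : S one01 x * A one01 x <= supnorm (cmul (S one01) (A one01))).
    { eapply Rle_trans; [|apply (supnorm_ge _ x Hx)]. rewrite cmul_ev. apply Rle_abs. }
    assert (HSA0 : 0 <= S one01 x * A one01 x)
      by (apply Rmult_le_pos; [apply (P_pos1 S); auto | apply (P_pos1 A); auto]).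
    destruct (Rle_lt_dec (supnorm Ef) 0) as [H0|H0].
    - assert (Hz : supnorm Ef = 0) by (generalize (supnorm_pos Ef); lra).
      rewrite Hmu, Hz, sqrt_0. unfold modc. destruct (Rle_dec 0 0) as [_|c]; [|lra].
      rewrite Rmult_0_l.
      apply (small_le0 _ (S one01 x * A one01 x)); auto.
      intros eps He. destruct (modc_small f eps He) as [d [Hd Hmd]].
      destruct (modc_prop f d Hd) as [Hw _].
      assert (Hb := modc_bound f d Hd).
      assert (K1 := keyL S A f d (modc f d) x HSw HSm HAw HAm Hd Hw Hb Hx).
      assert (K2 := keyL A S f d (modc f d) x HAw HAm HSw HSm Hd Hw Hb Hx).
      assert (Hk : 0 <= modc f d / d^2) by (apply Rdiv_le_0_compat; [auto| apply pow_lt; lra]).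
      assert (Q1 : modc f d / d^2 * (S e2 x * A one01 x - 2 * (S (copp e1) x * A (copp e1) x) + S one01 x * A e2 x) <= 0).
      { apply Rmult_le_0_l; lra. }
      assert (Q2 : modc f d / d^2 * (A e2 x * S one01 x - 2 * (A (copp e1) x * S (copp e1) x) + A one01 x * S e2 x) <= 0).
      { apply Rmult_le_0_l; lra. }
      assert (Q3 : modc f d * (S one01 x * A one01 x) <= eps * (S one01 x * A one01 x))
        by (apply Rmult_le_compat_r; auto).
      apply Rabs_le. split.
      + rewrite (Rmult_comm (A one01 x) (S one01 x)) in K2. nra.
      + nra.
    - set (d := mu n).
      assert (Hd : 0 < d) by (unfold d; rewrite Hmu; apply sqrt_lt_R0; auto).
      assert (Hd2 : d^2 = supnorm Ef) by (unfold d; rewrite Hmu; simpl; rewrite Rmult_1_r, sqrt_sqrt; lra).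
      destruct (modc_prop f d Hd) as [Hw _].
      assert (Hb := modc_bound f d Hd).
      assert (K1 := keyL S A f d (modc f d) x HSw HSm HAw HAm Hd Hw Hb Hx).
      assert (K2 := keyL A S f d (modc f d) x HAw HAm HSw HSm Hd Hw Hb Hx).
      assert (Q1 : modc f d / d^2 * (S e2 x * A one01 x - 2 * (S (copp e1) x * A (copp e1) x) + S one01 x * A e2 x) <= modc f d).
      { rewrite Hd2. apply Rle_trans with (modc f d / supnorm Ef * supnorm Ef).
        - apply Rmult_le_compat_l; auto. apply Rdiv_le_0_compat; lra.
        - right; field; lra. }
      assert (Q2 : modc f d / d^2 * (A e2 x * S one01 x - 2 * (A (copp e1) x * S (copp e1) x) + A one01 x * S e2 x) <= modc f d).
      { rewrite Hd2. apply Rle_trans with (modc f d / supnorm Ef * supnorm Ef).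
        - apply Rmult_le_compat_l; auto. apply Rdiv_le_0_compat; lra.
        - right; field; lra. }
      assert (Q3 : modc f d * (S one01 x * A one01 x) <= modc f d * supnorm (cmul (S one01) (A one01)))
        by (apply Rmult_le_compat_l; auto).
      apply Rabs_le. split.
      + rewrite (Rmult_comm (A one01 x) (S one01 x)) in K2. nra.
      + nra. }
  assert (Part1 : supnorm (csub (S f) (A f)) <=
      M * (supnorm (csub (S one01) (A one01)) * supnorm (A f)
           + (supnorm (cmul (S one01) (A one01)) + 1) * modc f (mu n))).
  { apply supnorm_le. intros x Hx. rewrite csub_ev.
    assert (Ha : inf01 (A one01) <= A one01 x) by auto.
    assert (Hapos : 0 < A one01 x) by lra.
    assert (E : S f x + -1 * A f x = ((S f x * A one01 x - S one01 x * A f x) + (S one01 x - A one01 x) * A f x) / A one01 x)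
      by (field; lra).
    rewrite E. unfold Rdiv. rewrite Rabs_mult, (Rabs_right (/ A one01 x)) by (left; apply Rinv_0_lt_compat; lra).
    assert (N1 : Rabs ((S f x * A one01 x - S one01 x * A f x) + (S one01 x - A one01 x) * A f x) <=
       supnorm (csub (S one01) (A one01)) * supnorm (A f) + (supnorm (cmul (S one01) (A one01)) + 1) * modc f (mu n)).
    { eapply Rle_trans; [apply Rabs_triang|]. rewrite Rabs_mult.
      assert (B1 : Rabs (S one01 x - A one01 x) <= supnorm (csub (S one01) (A one01))).
      { eapply Rle_trans; [|apply (supnorm_ge _ x Hx)]. rewrite csub_ev. right; f_equal; ring. }
      assert (B2 : Rabs (A f x) <= supnorm (A f)) by (apply supnorm_ge; auto).
      assert (B3 : Rabs (S one01 x - A one01 x) * Rabs (A f x) <= supnorm (csub (S one01) (A one01)) * supnorm (A f))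
        by (apply Rmult_le_compat; auto; apply Rabs_pos).
      specialize (HD x Hx). lra. }
    unfold M. rewrite Rmult_comm. apply Rmult_le_compat.
    - left; apply Rinv_0_lt_compat; lra.
    - apply Rabs_pos.
    - apply Rinv_le_contravar; auto.
    - auto. }
  split; auto.
  intros E. rewrite E in Part1.
  assert (Z : supnorm (csub (A one01) (A one01)) <= 0).
  { apply supnorm_le. intros x _. rewrite csub_ev. replace (A one01 x + -1 * A one01 x) with 0 by ring.
    rewrite Rabs_R0; lra. }
  generalize (supnorm_pos (csub (A one01) (A one01))); intros Z'.
  assert (Zq : supnorm (csub (A one01) (A one01)) = 0) by lra.
  rewrite Zq, Rmult_0_l, Rplus_0_l in Part1. rewrite Rmult_assoc. exact Part1.
Qed.
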